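(* For the $2$-server problem on the line, for any instance $I$, any prediction, and any $\lambda\in(0,1]$, there is $c\ge0$ depending only on the initial configuration such that $\mathrm{LambdaDC}(I)\le(1+1/\lambda)\cdot\mathrm{OPT}(I)+c$.
   Context: The $2$-server problem on the line: servers on $\mathbb{R}$ labeled $s_1\le s_2$, requests revealed online and served by moving a server to them; cost = total distance moved; $\mathrm{OPT}(I)$ is the optimal offline cost. A prediction gives for each request $r_t$ an index $p_t\in\{1,2\}$. LambdaDC: if $r_t<s_1$ or $r_t>s_2$, move only the closest server; if $s_1<r_t<s_2$ and $p_t=1$, move $s_1$ at speed $1$ and $s_2$ at speed $\lambda$ towards $r_t$ until one reaches it; if $p_t=2$, the speeds are swapped. *)

(* Defs.v *)
From Stdlib Require Import Reals List.
From Coquelicot Require Import Coquelicot.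
Open Scope R_scope.

(* Index of a server: s1 (left) or s2 (right). *)
Inductive srv := S1 | S2.

Definition lambdaDC_step (lam : R) (pi : srv) (s1 s2 r : R) : R * R :=
  if Rle_dec r s1 then (r, s2)
  else if Rle_dec s2 r then (s1, r)
  else match pi with
       | S1 => (* s1 speed 1, s2 speed lam, until one reaches r *)
         let t := Rmin (r - s1) ((s2 - r) / lam) in (s1 + t, s2 - lam * t)
       | S2 => (* s1 speed lam, s2 speed 1 *)
         let t := Rmin ((r - s1) / lam) (s2 - r) in (s1 + lam * t, s2 - t)
       end.

(* Total cost of LambdaDC on requests rs, starting at time t from (s1,s2);
   p t is the predicted index for the request revealed at time t. *)
Fixpoint lambdaDC_cost (lam : R) (p : nat -> srv) (t : nat) (s1 s2 : R)
    (rs : list R) : R :=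
  match rs with
  | nil => 0
  | r :: rs' =>
    let (n1, n2) := lambdaDC_step lam (p t) s1 s2 r in
    Rabs (n1 - s1) + Rabs (n2 - s2) + lambdaDC_cost lam p (S t) n1 n2 rs'
  end.

(* Offline schedules: the configuration (a_t, b_t) after serving request t.
   Feasible iff one of the two servers is at r_t. *)
Fixpoint feasible (rs : list R) (sch : list (R * R)) : Prop :=
  match rs, sch with
  | nil, nil => True
  | r :: rs', (a, b) :: sch' => (a = r \/ b = r) /\ feasible rs' sch'
  | _, _ => False
  end.

Fixpoint sched_cost (a0 b0 : R) (sch : list (R * R)) : R :=
  match sch with
  | nil => 0
  | (a, b) :: sch' => Rabs (a - a0) + Rabs (b - b0) + sched_cost a b sch'
  end.

Definition OPT (x1 x2 : R) (rs : list R) : R :=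
  real (Glb_Rbar (fun v => exists sch, feasible rs sch /\ v = sched_cost x1 x2 sch)).

(* Main.v *)
Require Import Defs.
From Stdlib Require Import Reals List Lra Psatz.
From Coquelicot Require Import Coquelicot.
Open Scope R_scope.

Definition Psi (lam s1 s2 y1 y2 : R) : R :=
  (1 + lam) * (Rabs (s1 - y1) + Rabs (s2 - y2)) + (s2 - s1).

Lemma mid_ok lam s1 s2 r y1 y2 v1 v2 :
  0 < lam <= 1 -> y1 <= y2 -> (y1 = r \/ y2 = r) ->
  0 <= v1 -> 0 <= v2 -> s1 + v1 <= r -> r <= s2 - v2 ->
  (v2 = lam * v1 \/ v1 = lam * v2) ->
  s1 + v1 <= s2 - v2 /\
  lam * (Rabs (s1 + v1 - s1) + Rabs (s2 - v2 - s2)) + Psi lam (s1 + v1) (s2 - v2) y1 y2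
    <= Psi lam s1 s2 y1 y2.
Proof.
  intros Hl Hy Hr H1 H2 Hs1 Hs2 Hv.
  split; [lra|].
  replace (s1 + v1 - s1) with v1 by ring.
  replace (s2 - v2 - s2) with (- v2) by ring.
  rewrite Rabs_pos_eq by lra. rewrite Rabs_Ropp, Rabs_pos_eq by lra.
  unfold Psi.
  destruct Hr as [Hr|Hr].
  - assert (HM : Rabs (s1 + v1 - y1) + Rabs (s2 - v2 - y2) <=
                 Rabs (s1 - y1) + Rabs (s2 - y2) - v1 + v2) by (split_Rabs; lra).
    assert (lam * v2 <= v1) by (destruct Hv; nra).
    nra.
  - assert (HM : Rabs (s1 + v1 - y1) + Rabs (s2 - v2 - y2) <=
                 Rabs (s1 - y1) + Rabs (s2 - y2) + v1 - v2) by (split_Rabs; lra).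
    assert (lam * v1 <= v2) by (destruct Hv; nra).
    nra.
Qed.

Lemma step_ok lam pi s1 s2 r y1 y2 n1 n2 :
  0 < lam <= 1 -> s1 <= s2 -> y1 <= y2 -> (y1 = r \/ y2 = r) ->
  lambdaDC_step lam pi s1 s2 r = (n1, n2) ->
  n1 <= n2 /\
  lam * (Rabs (n1 - s1) + Rabs (n2 - s2)) + Psi lam n1 n2 y1 y2 <= Psi lam s1 s2 y1 y2.
Proof.
  intros Hl Hs Hy Hr E.
  assert (Hyr : y1 <= r <= y2) by (destruct Hr; lra).
  unfold lambdaDC_step in E.
  destruct (Rle_dec r s1) as [h1|h1].
  { inversion E; subst. split; [lra|].
    replace (n2 - n2) with 0 by ring. rewrite Rabs_R0.
    rewrite (Rabs_left1 (n1 - s1)) by lra.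
    unfold Psi.
    assert (HM : Rabs (n1 - y1) + Rabs (n2 - y2) <=
                 Rabs (s1 - y1) + Rabs (n2 - y2) - (s1 - n1)) by (split_Rabs; lra).
    nra. }
  destruct (Rle_dec s2 r) as [h2|h2].
  { inversion E; subst. split; [lra|].
    replace (n1 - n1) with 0 by ring. rewrite Rabs_R0.
    rewrite (Rabs_pos_eq (n2 - s2)) by lra.
    unfold Psi.
    assert (HM : Rabs (n1 - y1) + Rabs (n2 - y2) <=
                 Rabs (n1 - y1) + Rabs (s2 - y2) - (n2 - s2)) by (split_Rabs; lra).
    nra. }
  destruct pi.
  - set (t := Rmin (r - s1) ((s2 - r) / lam)) in E.
    inversion E; subst.
    assert (Ht0 : 0 <= t).
    { unfold t, Rmin. destruct Rle_dec; [lra|].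
      apply Rmult_le_pos; [lra|]. left; apply Rinv_0_lt_compat; lra. }
    assert (Ht1 : t <= r - s1) by (unfold t; apply Rmin_l).
    assert (Ht2 : lam * t <= s2 - r).
    { assert (t <= (s2 - r) / lam) by (unfold t; apply Rmin_r).
      apply (Rmult_le_compat_l lam) in H; [|lra].
      replace (lam * ((s2 - r) / lam)) with (s2 - r) in H by (field; lra). lra. }
    apply (mid_ok lam s1 s2 r y1 y2 t (lam * t)); try lra; try nra.
  - set (t := Rmin ((r - s1) / lam) (s2 - r)) in E.
    inversion E; subst.
    assert (Ht0 : 0 <= t).
    { unfold t, Rmin. destruct Rle_dec; [|lra].
      apply Rmult_le_pos; [lra|]. left; apply Rinv_0_lt_compat; lra. }
    assert (Ht1 : t <= s2 - r) by (unfold t; apply Rmin_r).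
    assert (Ht2 : lam * t <= r - s1).
    { assert (t <= (r - s1) / lam) by (unfold t; apply Rmin_l).
      apply (Rmult_le_compat_l lam) in H; [|lra].
      replace (lam * ((r - s1) / lam)) with (r - s1) in H by (field; lra). lra. }
    apply (mid_ok lam s1 s2 r y1 y2 (lam * t) t); try lra; try nra.
Qed.

Lemma opt_move s1 s2 a b a0 b0 :
  Rabs (s1 - Rmin a b) + Rabs (s2 - Rmax a b) <=
  Rabs (s1 - Rmin a0 b0) + Rabs (s2 - Rmax a0 b0) + (Rabs (a - a0) + Rabs (b - b0)).
Proof.
  unfold Rmin, Rmax; destruct (Rle_dec a b); destruct (Rle_dec a0 b0); split_Rabs; lra.
Qed.

Lemma main_ind lam p : 0 < lam <= 1 ->
  forall rs sch t s1 s2 a0 b0, s1 <= s2 -> feasible rs sch ->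
  lam * lambdaDC_cost lam p t s1 s2 rs <=
  (1 + lam) * sched_cost a0 b0 sch + Psi lam s1 s2 (Rmin a0 b0) (Rmax a0 b0).
Proof.
  intros Hl rs. induction rs as [|r rs IH]; intros sch t s1 s2 a0 b0 Hs Hf.
  - destruct sch; [|contradiction]. simpl.
    assert (0 <= Psi lam s1 s2 (Rmin a0 b0) (Rmax a0 b0)).
    { unfold Psi. assert (0 <= Rabs (s1 - Rmin a0 b0)) by apply Rabs_pos.
      assert (0 <= Rabs (s2 - Rmax a0 b0)) by apply Rabs_pos. nra. }
    lra.
  - destruct sch as [|[a b] sch]; [contradiction|].
    destruct Hf as [Hab Hf].
    cbn [lambdaDC_cost sched_cost].
    destruct (lambdaDC_step lam (p t) s1 s2 r) as [n1 n2] eqn:E.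
    assert (Hmm : Rmin a b <= Rmax a b) by (unfold Rmin, Rmax; destruct Rle_dec; lra).
    assert (Hr : Rmin a b = r \/ Rmax a b = r).
    { unfold Rmin, Rmax; destruct Rle_dec; destruct Hab; auto. }
    destruct (step_ok lam (p t) s1 s2 r (Rmin a b) (Rmax a b) n1 n2 Hl Hs Hmm Hr E)
      as [Hn Hst].
    specialize (IH sch (S t) n1 n2 a b Hn Hf).
    pose proof (opt_move s1 s2 a b a0 b0) as Ho.
    unfold Psi in *.
    nra.
Qed.

Theorem lemma6 :
  forall lam : R, 0 < lam <= 1 ->
  forall x1 x2 : R, x1 <= x2 ->
  exists c : R, 0 <= c /\
    forall (rs : list R) (p : nat -> srv),
      lambdaDC_cost lam p 0 x1 x2 rs <= (1 + 1 / lam) * OPT x1 x2 rs + c.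
Proof.
  intros lam Hl x1 x2 Hx.
  exists ((x2 - x1) / lam). split.
  { apply Rmult_le_pos; [lra|]. left; apply Rinv_0_lt_compat; lra. }
  intros rs p.
  set (S := fun v => exists sch, feasible rs sch /\ v = sched_cost x1 x2 sch).
  set (C := lambdaDC_cost lam p 0 x1 x2 rs).
  assert (Hk : 0 < 1 + 1 / lam).
  { assert (0 < 1 / lam) by (apply Rdiv_lt_0_compat; lra). lra. }
  set (L := (C - (x2 - x1) / lam) / (1 + 1 / lam)).
  assert (HPsi : Psi lam x1 x2 (Rmin x1 x2) (Rmax x1 x2) = x2 - x1).
  { unfold Psi. rewrite Rmin_left, Rmax_right by lra.
    replace (x1 - x1) with 0 by ring. replace (x2 - x2) with 0 by ring.
    rewrite Rabs_R0. ring. }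
  assert (Hlb : forall v, S v -> L <= v).
  { intros v [sch [Hf Hv]].
    pose proof (main_ind lam p Hl rs sch 0 x1 x2 x1 x2 Hx Hf) as H.
    rewrite HPsi in H. fold C in H. rewrite Hv.
    unfold L. apply Rmult_le_reg_r with (1 + 1 / lam); [lra|].
    replace ((C - (x2 - x1) / lam) / (1 + 1 / lam) * (1 + 1 / lam))
      with (C - (x2 - x1) / lam) by (field; lra).
    apply Rmult_le_reg_l with lam; [lra|].
    replace (lam * (C - (x2 - x1) / lam)) with (lam * C - (x2 - x1)) by (field; lra).
    replace (lam * (sched_cost x1 x2 sch * (1 + 1 / lam))) with ((1 + lam) * sched_cost x1 x2 sch) by (field; lra).
    lra. }
  assert (Hex : exists sch, feasible rs sch).
  { exists (map (fun r => (r, x2)) rs). clear. induction rs; simpl; auto. }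
  destruct Hex as [sch0 Hsch0].
  assert (HS0 : S (sched_cost x1 x2 sch0)) by (exists sch0; auto).
  pose proof (Glb_Rbar_correct S) as [Hglb1 Hglb2].
  assert (Hge : Rbar_le (Finite L) (Glb_Rbar S)).
  { apply Hglb2. intros v Hv. simpl. apply Hlb; auto. }
  pose proof (Hglb1 _ HS0) as Hle.
  unfold OPT. fold S.
  destruct (Glb_Rbar S) as [g| |]; simpl in Hge, Hle; try contradiction.
  unfold L in Hge.
  apply Rmult_le_compat_l with (r := 1 + 1 / lam) in Hge; [|lra].
  replace ((1 + 1 / lam) * ((C - (x2 - x1) / lam) / (1 + 1 / lam)))
    with (C - (x2 - x1) / lam) in Hge by (field; lra).
  fold C. simpl. lra.
Qed.
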